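(* Let $\mathbb{K}$ be a skew field and $n\ge 2$. Every duality of $\mathsf{PG}(n,\mathbb{K})$ which is a polar $\{2,2'\}$-kangaroo is anisotropic.
   Context: A duality $\theta$ of $\mathsf{PG}(n,\mathbb{K})$ maps points to hyperplanes and hyperplanes to points (reversing incidence); it acts on incident point–hyperplane pairs by $(p,H)\mapsto(H^\theta,p^\theta)$. For incident pairs $(p,H),(p',H')$ the polar position is $2$ or $2'$ if and only if $p\neq p'$, $H\neq H'$, and ($p\in H'$ or $p'\in H$). $\theta$ is a polar $\{2,2'\}$-kangaroo if no pair is at position $2$ or $2'$ from its image. $\theta$ is anisotropic if it maps every chamber (complete flag) to an opposite chamber. *)

(* Defs.v *)
(* PG(n,K) over a skew field K is modelled as the lattice of
   (left) subspaces of the left K-vector space K^(n+1) = 'rV[K]_(n.+1). *)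
From mathcomp Require Import all_boot all_algebra.
Set Implicit Arguments. Unset Strict Implicit. Unset Printing Implicit Defensive.
Import GRing.Theory.
Local Open Scope ring_scope.

Section PG.
Variables (K : unitRingType) (n : nat).

Notation vec := 'rV[K]_(n.+1).
Definition vset := vec -> Prop.

Definition sub_eq (U W : vset) : Prop := forall x, U x <-> W x.
Definition sub_incl (U W : vset) : Prop := forall x, U x -> W x.

Definition subspace (U : vset) : Prop :=
  U 0 /\ (forall x y, U x -> U y -> U (x + y)) /\
  (forall (a : K) x, U x -> U (a *: x)).

Definition is_point (p : vset) : Prop :=
  exists v : vec, v != 0 /\ forall x, p x <-> exists a : K, x = a *: v.

Definition is_hyperplane (H : vset) : Prop :=
  exists c : 'cV[K]_(n.+1), c != 0 /\ forall x, H x <-> x *m c = 0.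

(* a duality (correlation): an inclusion-reversing bijection of the
   lattice of subspaces (up to extensional equality of sets) *)
Definition duality (th : vset -> vset) : Prop :=
  (forall U, subspace U -> subspace (th U)) /\
  (forall W, subspace W -> exists U, subspace U /\ sub_eq (th U) W) /\
  (forall U W, subspace U -> subspace W ->
     (sub_incl U W <-> sub_incl (th W) (th U))).

Definition pos_2_2' (p H p' H' : vset) : Prop :=
  ~ sub_eq p p' /\ ~ sub_eq H H' /\ (sub_incl p H' \/ sub_incl p' H).

(* no incident point-hyperplane pair is at position 2 or 2' from its image
   (p,H)^th = (H^th, p^th) *)
Definition polar_kangaroo_22' (th : vset -> vset) : Prop :=
  forall p H, is_point p -> is_hyperplane H -> sub_incl p H ->
    ~ pos_2_2' p H (th H) (th p).

(* chambers: complete flags V_1 < ... < V_n, with C i = V_(i+1) *)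
Definition chamber (C : 'I_n -> vset) : Prop :=
  (forall i, subspace (C i)) /\
  (forall i, exists x, C i x /\ x != 0) /\
  (forall i, exists x, ~ C i x) /\
  (forall i j : 'I_n, (i < j)%N -> sub_incl (C i) (C j) /\ ~ sub_incl (C j) (C i)).

Definition complementary (U W : vset) : Prop :=
  (forall x, U x -> W x -> x = 0) /\
  (forall x, exists y z, U y /\ W z /\ x = y + z).

Definition opposite (C D : 'I_n -> vset) : Prop :=
  forall i, complementary (C i) (D (rev_ord i)).

(* image of a chamber under a duality: (V_n^th < ... < V_1^th) *)
Definition dual_chamber (th : vset -> vset) (C : 'I_n -> vset) : 'I_n -> vset :=
  fun j => th (C (rev_ord j)).

Definition anisotropic (th : vset -> vset) : Prop :=
  forall C, chamber C -> opposite C (dual_chamber th C).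

End PG.

Definition skew_field (K : unitRingType) : Prop :=
  forall x : K, x != 0 -> x \is a GRing.unit.

(* Main.v *)
Require Import Defs.
From mathcomp Require Import all_boot all_algebra.
From Stdlib Require Import Classical.
From mathcomp Require Import zify.
Set Implicit Arguments. Unset Strict Implicit. Unset Printing Implicit Defensive.
Import GRing.Theory.
Local Open Scope ring_scope.

Section Aux.
Variables (K : unitRingType) (n : nat).
Notation vec := 'rV[K]_(n.+1).

Definition Pt (v : vec) : vset K n := fun x => exists a : K, x = a *: v.
Definition Hy (c : 'cV[K]_(n.+1)) : vset K n := fun x => x *m c = 0.

Lemma Pt_sub v : subspace (Pt v).
Proof.
split; first by exists 0; rewrite scale0r.
split.
  by move=> x y [a ->] [b ->]; exists (a + b); rewrite scalerDl.
by move=> a x [b ->]; exists (a * b); rewrite scalerA.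
Qed.

Lemma Pt_point v : v != 0 -> is_point (Pt v).
Proof. by move=> hv; exists v; split. Qed.

Lemma Hy_sub c : subspace (Hy c).
Proof.
split; first by rewrite /Hy mul0mx.
split.
  by move=> x y; rewrite /Hy mulmxDl => -> ->; rewrite addr0.
by move=> a x; rewrite /Hy -scalemxAl => ->; rewrite scaler0.
Qed.

Lemma Pt_in U v : subspace U -> U v -> sub_incl (Pt v) U.
Proof. by move=> [_ [_ hs]] hv x [a ->]; apply: hs. Qed.

Lemma pick3 (A B : vset K n -> Prop) H1 H2 H3 :
  (forall X Y, A X -> A Y -> sub_eq X Y) ->
  (forall X Y, B X -> B Y -> sub_eq X Y) ->
  ~ sub_eq H1 H2 -> ~ sub_eq H1 H3 -> ~ sub_eq H2 H3 ->
  exists H, (H = H1 \/ H = H2 \/ H = H3) /\ ~ A H /\ ~ B H.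
Proof.
move=> hA hB n12 n13 n23.
destruct (classic (A H1)) as [a1|a1]; destruct (classic (B H1)) as [b1|b1];
destruct (classic (A H2)) as [a2|a2]; destruct (classic (B H2)) as [b2|b2];
destruct (classic (A H3)) as [a3|a3]; destruct (classic (B H3)) as [b3|b3];
  try (exists H1; tauto); try (exists H2; tauto); try (exists H3; tauto);
  exfalso;
  first [ apply: n12; (apply: hA; eassumption) || (apply: hB; eassumption)
        | apply: n13; (apply: hA; eassumption) || (apply: hB; eassumption)
        | apply: n23; (apply: hA; eassumption) || (apply: hB; eassumption) ].
Qed.


Lemma exists3 (k : 'I_n.+1) : (2 <= n)%N ->
  exists i j : 'I_n.+1, [/\ i != k, j != k & i != j].
Proof.
move=> hn.
have h0 : (0 < n.+1)%N by [].
have h1 : (1 < n.+1)%N by rewrite ltnS; apply: leq_trans hn.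
have h2 : (2 < n.+1)%N by rewrite ltnS.
case: k => [[|[|kk]] hk].
- by exists (Ordinal h1), (Ordinal h2); split; rewrite -val_eqE.
- by exists (Ordinal h0), (Ordinal h2); split; rewrite -val_eqE.
- by exists (Ordinal h0), (Ordinal h1); split; rewrite -val_eqE.
Qed.

Definition cc (v : vec) (k l : 'I_n.+1) : 'cV[K]_(n.+1) :=
  \col_m ((m == l)%:R - (m == k)%:R * ((v 0 k)^-1 * v 0 l)).

Lemma cc_ent (v : vec) k l m : m != k -> cc v k l m 0 = (m == l)%:R.
Proof. by move=> hm; rewrite /cc mxE (negbTE hm) mul0r subr0. Qed.

Lemma cc_orth (v : vec) k l : v 0 k \is a GRing.unit -> l != k -> v *m cc v k l = 0.
Proof.
move=> hu hl; apply/rowP => z; rewrite !mxE.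
rewrite (bigD1 l) //= (bigD1 k) 1?eq_sym //= big1.
  rewrite !mxE eqxx (negbTE hl) eq_sym (negbTE hl) eqxx !mul0r subr0 mul1r mulr1.
  by rewrite sub0r mulrN mulrA mulrV // mul1r addr0 subrr.
move=> m /andP [hml hmk]; rewrite mxE (negbTE hml) (negbTE hmk).
by rewrite mul0r subr0 mulr0.
Qed.

Lemma Hy_e (c : 'cV[K]_(n.+1)) m : Hy c 'e_m <-> c m 0 = 0.
Proof.
rewrite /Hy -rowE; split.
  by move/rowP => /(_ 0); rewrite !mxE.
by move=> h; apply/rowP => z; rewrite !mxE (ord1 z).
Qed.

Lemma Hy_neq (a b : 'cV[K]_(n.+1)) m : a m 0 = 0 -> b m 0 != 0 ->
  ~ sub_eq (Hy a) (Hy b) /\ ~ sub_eq (Hy b) (Hy a).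
Proof.
move=> ha hb; split=> h.
  by move/eqP: hb; apply; apply/Hy_e; apply/h; apply/Hy_e.
by move/eqP: hb; apply; apply/Hy_e; apply/h; apply/Hy_e.
Qed.

End Aux.

Section Main.
Variables (K : unitRingType) (n : nat) (th : vset K n -> vset K n).
Hypotheses (hK : skew_field K) (hn : (2 <= n)%N) (hd : duality th)
  (hk : polar_kangaroo_22' th).

Lemma sub_eq_sym (X Y : vset K n) : sub_eq X Y -> sub_eq Y X.
Proof. by move=> h x; split=> /h. Qed.
Lemma sub_eq_trans (X Y Z : vset K n) : sub_eq X Y -> sub_eq Y Z -> sub_eq X Z.
Proof. by move=> h h' x; split=> [/h/h'|/h'/h]. Qed.

Lemma nz_col (c : 'cV[K]_(n.+1)) m : c m 0 != 0 -> c != 0.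
Proof. by apply: contra => /eqP ->; rewrite mxE. Qed.

Lemma no_abs (v : 'rV[K]_(n.+1)) : v != 0 -> ~ sub_incl (Pt v) (th (Pt v)).
Proof.
move: hd => [h1 [h2 h3]] hv habs.
have [k hk0] : exists k, v 0 k != 0.
  apply: NNPP => hn0; move/eqP: hv; apply; apply/rowP => z; rewrite mxE.
  by apply/eqP; apply/negPn/negP => h; apply: hn0; exists z.
have [i [j [hik hjk hij]]] := exists3 k hn.
have hu := hK hk0.
have e1i : cc v k i i 0 = 1 by rewrite cc_ent // eqxx.
have e1j : cc v k i j 0 = 0 by rewrite cc_ent // eq_sym (negbTE hij).
have e2i : cc v k j i 0 = 0 by rewrite cc_ent // (negbTE hij).
have e2j : cc v k j j 0 = 1 by rewrite cc_ent // eqxx.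
set c1 := cc v k i in e1i e1j; set c2 := cc v k j in e2i e2j.
have o1 : v *m c1 = 0 by apply: cc_orth.
have o2 : v *m c2 = 0 by apply: cc_orth.
have o3 : v *m (c1 + c2) = 0 by rewrite mulmxDr o1 o2 addr0.
have e3i : (c1 + c2) i 0 = 1 by rewrite mxE e1i e2i addr0.
have e3j : (c1 + c2) j 0 = 1 by rewrite mxE e1j e2j add0r.
have h10 := oner_neq0 K.
have [n12 _] := Hy_neq (b := c2) e1j ltac:(by rewrite e2j).
have [n13 _] := Hy_neq (b := c1 + c2) e1j ltac:(by rewrite e3j).
have [n23 _] := Hy_neq (b := c1 + c2) e2i ltac:(by rewrite e3i).
have hB : forall X Y, (sub_eq (Pt v) (th X) /\ subspace X) ->
      (sub_eq (Pt v) (th Y) /\ subspace Y) -> sub_eq X Y.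
  move=> X Y [hX sX] [hY sY].
  have e : sub_eq (th X) (th Y) := sub_eq_trans (sub_eq_sym hX) hY.
  move=> x; split.
  + by move: x; apply/(h3 _ _ sX sY) => y /e.
  + by move: x; apply/(h3 _ _ sY sX) => y /e.
have [H [hH [nA nB]]] := pick3
  (A := fun X => sub_eq X (th (Pt v)))
  (B := fun X => sub_eq (Pt v) (th X) /\ subspace X)
  (fun X Y hX hY => sub_eq_trans hX (sub_eq_sym hY))
  hB n12 n13 n23.
have good : forall c, c != 0 -> v *m c = 0 -> H = Hy c -> False.
  move=> c hc0 hvc eH; rewrite eH in nA nB.
  apply: (hk (p := Pt v) (H := Hy c)).
  + exact: Pt_point.
  + by exists c; split.
  + by move=> x [a ->]; rewrite /Hy -scalemxAl hvc scaler0.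
  + split; first by move=> e; apply: nB; split => //; exact: Hy_sub.
    split; first by move=> e; apply: nA.
    by left.
case: hH => [eH|[eH|eH]].
+ by apply: (good c1 _ o1 eH); apply: (nz_col (m := i)); rewrite e1i.
+ by apply: (good c2 _ o2 eH); apply: (nz_col (m := j)); rewrite e2j.
+ by apply: (good (c1 + c2) _ o3 eH); apply: (nz_col (m := i)); rewrite e3i.
Qed.

Lemma compl (U : vset K n) : subspace U -> complementary U (th U).
Proof.
move=> sU; have hd' := hd; move: hd' => [h1 [h2 h3]].
have sPt := @Pt_sub K n.
split.
  move=> x hx hx'; case: (eqVneq x 0) => // hx0; exfalso.
  apply: (no_abs hx0) => y hy.
  have hpU : sub_incl (Pt x) U := Pt_in sU hx.
  have := (proj1 (h3 _ _ (sPt x) sU) hpU).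
  apply; exact: (Pt_in (h1 _ sU) hx' hy).
move=> x; apply: NNPP => hW.
pose W : vset K n := fun x => exists y z, U y /\ th U z /\ x = y + z.
have sW : subspace W.
  have [s0 [sD sZ]] := sU; have [t0 [tD tZ]] := h1 _ sU.
  split; first by exists 0, 0; rewrite addr0.
  split.
    move=> a b [y1 [z1 [u1 [v1 ->]]]] [y2 [z2 [u2 [v2 ->]]]].
    exists (y1 + y2), (z1 + z2); split; first exact: sD.
    split; first exact: tD.
    by rewrite addrACA.
  move=> a b [y [z [u [w ->]]]]; exists (a *: y), (a *: z).
  by split; [exact: sZ | split; [exact: tZ | rewrite scalerDr]].
have [X [sX eX]] := h2 _ sW.
have sT : subspace (fun _ : 'rV[K]_(n.+1) => True) by [].
have [Y [sY eY]] := h2 _ sT.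
have [v [Xv v0]] : exists v, X v /\ v != 0.
  apply: NNPP => hn0; apply: hW.
  have hXY : sub_incl X Y.
    move=> y Xy; case: (eqVneq y 0) => [->|y0]; first by case: sY.
    by exfalso; apply: hn0; exists y.
  apply/eX; apply: (proj1 (h3 _ _ sX sY) hXY); exact/eY.
have hpX : sub_incl (Pt v) X := Pt_in sX Xv.
have tXp := proj1 (h3 _ _ (sPt v) sX) hpX.
have hUp : sub_incl U (th (Pt v)).
  by move=> y Uy; apply: tXp; apply/eX; exists y, 0; rewrite addr0; split => //; split => //; case: (h1 _ sU).
have hTp : sub_incl (th U) (th (Pt v)).
  by move=> z Tz; apply: tXp; apply/eX; exists 0, z; rewrite add0r; split => //; case: sU.
have hpU := proj2 (h3 _ _ (sPt v) sU) hTp.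
by apply: (no_abs v0) => y /hpU /hUp.
Qed.

Lemma aniso : anisotropic th.
Proof.
move=> C [hC _] i; rewrite /dual_chamber rev_ordK; exact: compl.
Qed.

End Main.

Theorem proposition4p3 (K : unitRingType) (n : nat) (th : vset K n -> vset K n) :
  skew_field K -> (2 <= n)%N ->
  duality th -> polar_kangaroo_22' th -> anisotropic th.
Proof. by move=> *; apply: aniso. Qed.
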